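(* Suppose processes know neither $n$ nor any upper bound $D$ on the network causal diameter, i.e., the algorithm executed by the processes does not depend on $n$ or $D$. Then there is no deterministic algorithm that solves consensus in every run (for every number of processes $n\ge2$, every assignment of input values, and every sequence of communication graphs satisfying Assumption 1 for some positive integer $D$).
   Context: Model: a finite set $\Pi$ of $n\ge2$ processes runs a deterministic algorithm in synchronous lock-step rounds $r=1,2,\dots$. An adversary fixes an infinite sequence of simple directed graphs $\mathcal{G}^1,\mathcal{G}^2,\dots$ on vertex set $\Pi$; $(p\to q)\in\mathcal{G}^r$ iff $q$ receives $p$'s round-$r$ message in round $r$. In round $r$ each process broadcasts a message determined by its current state (received exactly by its out-neighbours in $\mathcal{G}^r$), then computes its new state from its current state and the set of (sender, message) pairs received in round $r$. Consensus: each process $p$ starts with an input value $v_p$ from an ordered set $V$ with at least two elements and may irrevocably decide; Agreement: any two decided values are equal; Validity: every decided value is some process's input; Termination: every process eventually decides. Causality: $p$ causally influences $q$ in round $t$ if $q=p$ or $(p\to q)\in\mathcal{G}^t$; a causal chain of length $k\ge1$ from $p$ in round $t$ to $q$ is a sequence $p=p_0,\dots,p_k=q$ with $p_i$ causally influencing $p_{i+1}$ in round $t+i$; $d_t(p,q)$ is the least such $k$ ($\infty$ if none). A root component of $\mathcal{G}^t$ is a strongly connected component $\mathcal{R}$ with no edge $(q\to p)$, $p\in\mathcal{R}$, $q\notin\mathcal{R}$. For an interval $I=[r,s]$, an $I$-vertex-stable root component is a set $\mathcal{R}\subseteq\Pi$ that is a root component of $\mathcal{G}^t$ for every $t\in I$.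 When each $\mathcal{G}^x$ has a unique root component $\mathcal{R}^x$, the network causal diameter of round $x$ is $D^x=\max\{d_x(p,q):p\in\mathcal{R}^x,q\in\Pi\}$, and for $I=[r,s]$, $D^I=\max\{D^x:x\in I,\ x+D^x-1\le s\}$ ($\infty$ if empty). An $I$-vertex-stable root component with $I=[r,s]$ is $D$-bounded if $D\ge D^I$ and $D^{s-D+1}\le D$. Assumption 1 (parameter $D$): every $\mathcal{G}^r$ has exactly one root component; every $I$-vertex-stable root component with $|I|\ge D$ is $D$-bounded; and there is an interval $J=[r_{ST},r_{ST}+d]$ with $d>4D$ such that there is a $D$-bounded $J$-vertex-stable root component. *)

(* Defs.v *)
From mathcomp Require Import all_boot all_order.
Set Implicit Arguments. Unset Strict Implicit. Unset Printing Implicit Defensive.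

(* A (uniform) deterministic algorithm: it is a single object that does not
   depend on the number of processes n nor on D.  Processes know their own
   (unique, natural-number) identifier and their input value.  In each round a
   process broadcasts [send s]; it then receives, for each sender identifier k,
   either [Some m] (it received m from the process with identifier k) or [None].
   [decision s] is the decision output of a process in state s (if any). *)
Record Algorithm (V : Type) := {
  State : Type;
  Msg : Type;
  init : nat -> V -> State;
  send : State -> Msg;
  trans : State -> (nat -> option Msg) -> State;
  decision : State -> option V
}.

Section Model.
Variable n : nat.
(* communication graphs: G t is the graph of round t (t >= 1);
   G t p q  means the edge (p -> q) is present in round t *)
Variable G : nat -> rel 'I_n.

Section Run.
Variable V : Type.
Variable A : Algorithm V.
Variable ids : 'I_n -> nat.
Variable input : 'I_n -> V.

Definition received (t : nat) (prev : 'I_n -> State A) (p : 'I_n)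
  : nat -> option (Msg A) :=
  fun k => omap (fun q => send (prev q)) [pick q | (ids q == k) && G t q p].

(* run r p = state of p at the end of round r (run 0 = initial state) *)
Fixpoint run (r : nat) : 'I_n -> State A :=
  match r with
  | 0 => fun p => init A (ids p) (input p)
  | r'.+1 => fun p => trans (run r' p) (received r'.+1 (run r') p)
  end.

Definition decides (p : 'I_n) (v : V) : Prop :=
  exists r, decision (run r p) = Some v /\
            forall r', r' < r -> decision (run r' p) = None.

Definition solves_consensus : Prop :=
  [/\ (forall p q v w, decides p v -> decides q w -> v = w),
      (forall p v, decides p v -> exists q, v = input q)
    & (forall p, exists v, decides p v)].
End Run.

Definition influences (t : nat) (p q : 'I_n) : Prop := q = p \/ G t p q.

Definition causal_chain (t : nat) (p q : 'I_n) (k : nat) : Prop :=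
  1 <= k /\ exists s : nat -> 'I_n,
    [/\ s 0 = p, s k = q & forall i, i < k -> influences (t + i) (s i) (s i.+1)].

Definition dist_is (t : nat) (p q : 'I_n) (k : nat) : Prop :=
  causal_chain t p q k /\ forall j, j < k -> ~ causal_chain t p q j.

Definition root_component (t : nat) (R : {set 'I_n}) : Prop :=
  [/\ R != set0,
      {in R &, forall p q, connect (G t) p q},
      (forall p q, p \in R -> connect (G t) p q -> connect (G t) q p -> q \in R)
    & (forall p q, q \in R -> G t p q -> p \in R)].

Definition netdiam_is (x k : nat) : Prop :=
  exists R, root_component x R /\
    (forall p q, p \in R -> exists j, dist_is x p q j /\ j <= k) /\
    (exists p q, p \in R /\ dist_is x p q k).

(* D >= D^I for I = [r, s]  (D^I = infinity if the defining set is empty) *)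
Definition DI_le (r s D : nat) : Prop :=
  (exists x k, [/\ r <= x <= s, netdiam_is x k & x + k - 1 <= s]) /\
  (forall x k, r <= x <= s -> netdiam_is x k -> x + k - 1 <= s -> k <= D).

Definition vs_root (r s : nat) (R : {set 'I_n}) : Prop :=
  forall t, r <= t <= s -> root_component t R.

Definition D_bounded (r s D : nat) : Prop :=
  DI_le r s D /\ exists k, netdiam_is (s.+1 - D) k /\ k <= D.

Definition Assumption1 (D : nat) : Prop :=
  [/\ (forall t, 1 <= t -> exists! R, root_component t R),
      (forall r s R, 1 <= r -> r <= s -> D <= s.+1 - r ->
          vs_root r s R -> D_bounded r s D)
    & (exists rST d R, [/\ 1 <= rST, 4 * D < d,
          vs_root rST (rST + d) R & D_bounded rST (rST + d) D])].

Definition simple_graphs : Prop := forall t p, ~~ G t p p.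
End Model.

(* Main.v *)
Require Import Defs.
From mathcomp Require Import all_boot all_order.
From Stdlib Require Import FunctionalExtensionality.
From mathcomp Require Import zify.
Set Implicit Arguments. Unset Strict Implicit. Unset Printing Implicit Defensive.

Lemma dist1 n (G : nat -> rel 'I_n) t p q :
  influences G t p q -> dist_is G t p q 1.
Proof.
move=> H; split.
  split => //; exists (fun i => if i == 0 then p else q); split => // i.
  rewrite ltnS leqn0 => /eqP -> /=; rewrite addn0; exact: H.
by move=> j; rewrite ltnS leqn0 => /eqP -> [].
Qed.

Lemma dist_le n (G : nat -> rel 'I_n) t p q k j :
  dist_is G t p q k -> causal_chain G t p q j -> k <= j.
Proof. move=> [_ Hd] Hj; rewrite leqNgt; apply/negP => H; exact: Hd j H Hj. Qed.

Section Graphs.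
Variable n : nat.
Variable T : nat.
Variable c : 'I_n.

Definition Gph (t : nat) : rel 'I_n := fun i j =>
  if t <= T then (nat_of_ord j == (nat_of_ord i).+1) else (i == c) && (j != c).

Lemma Gph_simple : simple_graphs Gph.
Proof.
move=> t p; rewrite /Gph; case: ifP => _.
  by apply/negP => /eqP; lia.
by case: eqP.
Qed.

Lemma conn1 t x y : t <= T -> connect (Gph t) x y -> x <= y.
Proof.
move=> Ht /connectP[p]; elim: p x => [|z p IH] x /=; first by move=> _ ->.
move=> /andP[Hz Hp] Hy; move: Hz; rewrite /Gph Ht /= => /eqP Hz.
have := IH z Hp Hy; lia.
Qed.

Lemma conn2 t x y : T < t -> connect (Gph t) x y -> x = y \/ x = c.
Proof.
move=> Ht; have Ht' : (t <= T) = false by rewrite leqNgt Ht.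
move=> /connectP[[|z p]] /=; first by move=> _ ->; left.
by rewrite /Gph Ht' => /andP[/andP[/eqP -> _] _] _; right.
Qed.

Lemma root1 t R : t <= T -> root_component Gph t R -> R = [set x | val x == 0].
Proof.
move=> Ht [/set0Pn [x0 Hx0] Hconn Hclos Hin].
have [y0 [Hy0 Hv]] : exists y, y \in R /\ val y = 0.
  suff H : forall k (x : 'I_n), val x = k -> x \in R -> exists y, y \in R /\ val y = 0.
    exact: H _ x0 erefl Hx0.
  elim=> [|k IH] x Hx HR; first by exists x.
  have Hk : k < n by move: (ltn_ord x); rewrite Hx; lia.
  apply: (IH (Ordinal Hk)) => //; apply: (Hin _ x HR).
  by rewrite /Gph Ht /= Hx.
apply/setP => x; rewrite inE; apply/idP/idP.
  by move=> Hx; have := conn1 Ht (Hconn _ _ Hx Hy0); rewrite Hv leqn0.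
move/eqP => Hx; have -> : x = y0 by apply: val_inj; rewrite /= Hx Hv.
done.
Qed.

Lemma root1' t : 0 < n -> t <= T -> root_component Gph t [set x | val x == 0].
Proof.
move=> H0 Ht; split.
- by apply/set0Pn; exists (Ordinal H0); rewrite inE.
- move=> p q; rewrite !inE => /eqP Hp /eqP Hq.
  have -> : p = q by apply: val_inj; rewrite /= Hp Hq.
  exact: connect0.
- move=> p q; rewrite !inE => /eqP Hp _ Hqp.
  by have := conn1 Ht Hqp; rewrite Hp leqn0.
- move=> p q; rewrite inE => /eqP Hq; rewrite /Gph Ht /= Hq.
  by move=> /eqP.
Qed.

Lemma root2' t : T < t -> root_component Gph t [set c].
Proof.
move=> Ht; have Ht' : (t <= T) = false by rewrite leqNgt Ht.
split.
- by apply/set0Pn; exists c; rewrite set11.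
- move=> p q; rewrite !inE => /eqP -> /eqP ->; exact: connect0.
- move=> p q; rewrite !inE => /eqP -> _ Hqc.
  by case: (conn2 Ht Hqc) => ->.
- move=> p q; rewrite inE => /eqP ->; rewrite /Gph Ht' eqxx andbF.
  done.
Qed.

Lemma root2 t R : T < t -> root_component Gph t R -> R = [set c].
Proof.
move=> Ht; have Ht' : (t <= T) = false by rewrite leqNgt Ht.
move=> [/set0Pn [x Hx] Hconn Hclos Hin].
have Hc : c \in R.
  case: (eqVneq x c) => [<- //| Hxc].
  by apply: (Hin c x Hx); rewrite /Gph Ht' eqxx Hxc.
apply/setP => y; rewrite inE; apply/idP/eqP => [Hy|->//].
by case: (conn2 Ht (Hconn _ _ Hy Hc)).
Qed.

Lemma netdiam2 t : T < t -> netdiam_is Gph t 1.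
Proof.
move=> Ht; have Ht' : (t <= T) = false by rewrite leqNgt Ht.
exists [set c]; split; first exact: root2'.
split.
  move=> p q; rewrite inE => /eqP ->; exists 1; split => //.
  apply: dist1; case: (eqVneq q c) => [->|Hqc]; first by left.
  by right; rewrite /Gph Ht' eqxx Hqc.
exists c, c; split; first exact: set11.
by apply: dist1; left.
Qed.

Lemma netdiam_le1 t k : T < t -> netdiam_is Gph t k -> k <= 1.
Proof.
move=> Ht [R [HR [Hall [p [q [Hp Hd]]]]]].
have Ht' : (t <= T) = false by rewrite leqNgt Ht.
move: Hp; rewrite (root2 Ht HR) inE => /eqP Hp; subst p.
apply: (dist_le Hd); apply: (proj1 (dist1 _)).
case: (eqVneq q c) => [->|Hqc]; first by left.
by right; rewrite /Gph Ht' eqxx Hqc.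
Qed.

Lemma A1_2 (Hc : 0 < T -> val c != 0) r s R :
  1 <= r -> r <= s -> T.+1 <= s.+1 - r ->
  vs_root Gph r s R -> D_bounded Gph r s T.+1.
Proof.
move=> Hr Hrs HD Hvs.
case: (leqP r T) => HrT.
  exfalso.
  have HR1 := root1 HrT (Hvs r _).
  have HR2 := root2 (_ : T < s) (Hvs s _).
  have : c \in R by rewrite HR2 ?set11 // ?leqnn ?Hrs //; lia.
  rewrite HR1 ?inE; last by rewrite leqnn Hrs.
  by rewrite (negbTE (Hc (leq_trans Hr HrT))).
split.
  split.
    exists r, 1; split; [by rewrite leqnn Hrs | exact: netdiam2 | lia].
  move=> x k /andP[Hx _] Hk _.
  have HTx : T < x by lia.
  have := netdiam_le1 HTx Hk; lia.
exists 1; split; [apply: netdiam2; lia | done].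
Qed.

Lemma A1 : 0 < n -> (0 < T -> val c != 0) -> Assumption1 Gph T.+1.
Proof.
move=> H0 Hc; split.
- move=> t Ht; case: (leqP t T) => HtT.
    exists [set x | val x == 0]; split; first exact: root1'.
    by move=> R /(root1 HtT) ->.
  exists [set c]; split; first exact: root2'.
  by move=> R /(root2 HtT) ->.
- exact: A1_2.
- exists T.+1, (4 * T.+1).+1, [set c]; split => //.
    by move=> t /andP[Ht _]; apply: root2'.
  apply: (A1_2 Hc (R := [set c])); [done | lia | lia |].
  by move=> t /andP[Ht _]; apply: root2'.
Qed.
End Graphs.

Lemma received_eq n (G : nat -> rel 'I_n) V (A : Algorithm V) ids t
  (f g : 'I_n -> State A) p :
  (forall q, G t q p -> f q = g q) -> received G (A:=A) ids t f p = received G (A:=A) ids t g p.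
Proof.
move=> H; apply: functional_extensionality => k; rewrite /received.
by case: pickP => [q /andP[_ Hq] | _] /=; rewrite ?H.
Qed.

Definition solo V (A : Algorithm V) i x r :=
  iter r (fun s => trans s (fun _ => None)) (init A i x).

Lemma run_solo n (G : nat -> rel 'I_n) V (A : Algorithm V) ids input p T' :
  (forall t q, 0 < t <= T' -> ~~ G t q p) ->
  forall r, r <= T' -> run G A ids input r p = solo A (ids p) (input p) r.
Proof.
move=> H; elim=> [|r IH] Hr //=.
rewrite IH ?(ltnW Hr) //; congr trans.
apply: functional_extensionality => k; rewrite /received.
case: pickP => //= q /andP[_ Hq].
by rewrite (negbTE (H r.+1 q Hr)) in Hq.
Qed.

Lemma decides_ext n1 n2 (G1 : nat -> rel 'I_n1) (G2 : nat -> rel 'I_n2) V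
  (A : Algorithm V) ids1 ids2 in1 in2 p1 p2 v :
  (forall r, run G1 A ids1 in1 r p1 = run G2 A ids2 in2 r p2) ->
  decides G1 A ids1 in1 p1 v -> decides G2 A ids2 in2 p2 v.
Proof.
move=> H [r [H1 H2]]; exists r; split; first by rewrite -H.
by move=> r' Hr'; rewrite -H; apply: H2.
Qed.

Theorem theorem3 (d : Order.disp_t) (V : orderType d) (a b : V) (hab : a <> b) :
  ~ exists A : Algorithm V,
      forall (n : nat) (ids : 'I_n -> nat) (input : 'I_n -> V)
             (G : nat -> rel 'I_n) (D : nat),
        2 <= n -> injective ids -> simple_graphs G ->
        0 < D -> Assumption1 G D ->
        solves_consensus G A ids input.
Proof.
move=> [A HA].
pose G0 := Gph 0 (ord0 : 'I_2).
have H0 := HA 2 (fun i => val i) (fun _ => a) G0 1 isT val_inj (Gph_simple _ _) isT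
  (A1 (T := 0) (c := ord0) isT ltac:(done)).
have [_ Hval0 Hterm0] := H0.
have [v Hv] := Hterm0 ord0.
have [q0 Hq0] := Hval0 _ _ Hv; rewrite Hq0 in Hv; clear Hq0 q0 v.
have [r0 [Hd0 Hn0]] := Hv.
have Hsolo : forall r, run G0 A (fun i => val i) (fun _ => a) r ord0 = solo A 0 a r.
  move=> r; apply: (@run_solo _ _ _ _ _ _ _ r) => // t q _.
  by rewrite /G0 /Gph; case: ifP => _ //; rewrite eqxx andbF.
pose G1 := Gph r0 (ord_max : 'I_r0.+2).
pose inm := fun i : 'I_r0.+2 => if val i == 0 then a else b.
pose inb := fun _ : 'I_r0.+2 => b.
have Hc1 : 0 < r0 -> val (ord_max : 'I_r0.+2) != 0 by [].
have Hm := HA r0.+2 (fun i => val i) inm G1 r0.+1 isT val_inj (Gph_simple _ _) isT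
  (A1 (n := r0.+2) (T := r0) (c := ord_max) isT Hc1).
have Hb := HA r0.+2 (fun i => val i) inb G1 r0.+1 isT val_inj (Gph_simple _ _) isT
  (A1 (n := r0.+2) (T := r0) (c := ord_max) isT Hc1).
have Hsm : forall r, r <= r0 ->
    run G1 A (fun i => val i) inm r ord0 = solo A 0 a r.
  apply: (@run_solo _ _ _ _ _ _ _ r0) => t q /andP[_ Ht].
  by rewrite /G1 /Gph Ht.
have Hdm0 : decides G1 A (fun i => val i) inm ord0 a.
  exists r0; split; first by rewrite Hsm // -Hsolo.
  move=> r' Hr'; rewrite Hsm ?(ltnW Hr') // -Hsolo; exact: Hn0.
have Hline : forall r, r <= r0 -> forall j : 'I_r0.+2, r < j ->
    run G1 A (fun i => val i) inm r j = run G1 A (fun i => val i) inb r j.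
  elim=> [|r IH] Hr j Hj /=.
    by rewrite /inm /inb eqn0Ngt Hj.
  rewrite IH ?(ltnW Hr) ?(ltnW Hj) //; congr trans.
  apply: received_eq => q; rewrite /G1 /Gph Hr => /eqP Hq.
  apply: IH; [exact: ltnW | lia].
have Hz : forall r, run G1 A (fun i => val i) inm r ord_max =
                    run G1 A (fun i => val i) inb r ord_max.
  elim=> [|r IH]; first by [].
  case: (leqP r.+1 r0) => H.
    by apply: Hline => //=; lia.
  rewrite /= IH; congr trans; apply: received_eq => q.
  by rewrite /G1 /Gph leqNgt H /= eqxx andbF.
have [_ Hvalb Htermb] := Hb.
have [w Hw] := Htermb ord_max.
have [qb Hqb] := Hvalb _ _ Hw; rewrite Hqb /inb in Hw.
have Hdmz : decides G1 A (fun i => val i) inm ord_max b.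
  apply: (decides_ext (G1 := G1) (in1 := inb)) Hw => r; by rewrite Hz.
have [Hagr _ _] := Hm.
exact: hab (Hagr _ _ _ _ Hdm0 Hdmz).
Qed.
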